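(* Let $D_N=\sum_{k=0}^{N}\binom{N}{k}^2 2^k$ denote the $N$-th central Delannoy number. For every non-negative integer $n$, $$v_3(D_{2n+1})=1+v_3(2n+1)+v_3\Big(\binom{2n}{n}\Big),\qquad v_3(D_{2n})=v_3\Big(\binom{2n}{n}\Big).$$
   Context: $v_3(y)$ denotes the $3$-adic valuation of a nonzero integer $y$. Equivalently, $D_N$ is the number of lattice paths from $(0,0)$ to $(N,N)$ using steps $(1,0)$, $(0,1)$, $(1,1)$. *)

(* Defs.v *)
From mathcomp Require Import all_boot.
Set Implicit Arguments. Unset Strict Implicit. Unset Printing Implicit Defensive.

Definition delannoy (N : nat) : nat := \sum_(0 <= k < N.+1) 'C(N, k) ^ 2 * 2 ^ k.

Definition v3 (y : nat) : nat := logn 3 y.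

(* Main.v *)
Require Import Defs.
From mathcomp Require Import all_boot all_algebra ring zify.
Set Implicit Arguments. Unset Strict Implicit.
Import GRing.Theory.

Definition ee (m : nat) : nat := if odd m then 0 else 2 ^ m./2 * 'C(m, m./2).

Lemma aux_eq (m k : nat) : (m == 2 * k) = (odd m == false) && (k == m./2).
Proof.
apply/idP/idP.
  by move/eqP => ->; rewrite mul2n odd_double doubleK !eqxx.
case/andP => /eqP ho /eqP ->. by rewrite -{1}(odd_double_half m) ho add0n mul2n.
Qed.

Section PolyPart.
Local Open Scope ring_scope.

Lemma coefXc (c N j : nat) : ((c%:P + 'X)^+N : {poly nat})`_j =
  if (j <= N)%N then (c ^ (N - j) * 'C(N, j))%N else 0%N.
Proof.
rewrite exprDn coef_sum.
transitivity (\sum_(i < N.+1 | i == j :> nat) (c ^ (N - i) * 'C(N, i))%N).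
  rewrite [RHS]big_mkcond /=. apply: eq_bigr => i _.
  rewrite coefMn -polyC_exp coefCM coefXn !natrE eq_sym.
  by case: eqP => _; rewrite ?muln1 ?muln0 ?mul0rn // -mulr_natr natn.
by rewrite (big_ord1_eq _ (fun i => (c ^ (N - i) * 'C(N, i))%N)) ltnS.
Qed.

Lemma coef2X2 (m : nat) : ((2%:P + 'X^2)^+m : {poly nat})`_m = ee m.
Proof.
rewrite exprDn coef_sum.
transitivity (\sum_(i < m.+1 | (odd m == false) && (i == m./2 :> nat)) (2 ^ (m - i) * 'C(m, i))%N).
  rewrite [RHS]big_mkcond /=; apply: eq_bigr => i _.
  rewrite coefMn -polyC_exp -exprM coefCM coefXn !natrE.
  rewrite aux_eq.
  by case: ifP => _; rewrite ?muln1 ?muln0 ?mul0rn // -mulr_natr natn.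
rewrite /ee; case ho: (odd m) => /=; first by rewrite big_pred0_eq.
rewrite (big_ord1_eq _ (fun i => (2 ^ (m - i) * 'C(m, i))%N)) ltnS.
have hm : m = (m./2).*2 by rewrite -{1}(odd_double_half m) ho.
have -> : (m - m./2 = m./2)%N by rewrite {1}hm -addnn addnK.
by rewrite [X in (_ <= X)%N]hm -addnn leq_addr.
Qed.
Lemma pid : ((1%:P + 'X) * (2%:P + 'X) : {poly nat}) = (2%:P + 'X^2) + 3%:P * 'X.
Proof.
have -> : (3%:P : {poly nat}) = 1%:P + 2%:P by rewrite -polyCD.
rewrite polyC1; ring.
Qed.

Lemma delE (N : nat) : delannoy N = (\sum_(i < N.+1) 'C(N, i) * 3 ^ i * ee (N - i))%N.
Proof.
have h := erefl ((((1%:P + 'X) * (2%:P + 'X)) ^+ N : {poly nat})`_N).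
rewrite [in RHS]pid [in RHS]exprDn [in RHS]coef_sum [in LHS]exprMn [in LHS]coefM in h.
rewrite /delannoy big_mkord.
transitivity (\sum_(j < N.+1) ((1%:P + 'X : {poly nat}) ^+ N)`_j * ((2%:P + 'X : {poly nat}) ^+ N)`_(N - j)%N).
  apply: eq_bigr => j _. rewrite !coefXc.
  have hj : (j <= N)%N by rewrite -ltnS ltn_ord.
  rewrite hj leq_subr exp1n mul1n subKn // bin_sub //.
  rewrite natn /GRing.mul /=; ring.
rewrite h; apply: eq_bigr => i _.
rewrite coefMn exprMn -polyC_exp mulrA coefMXn ltnNge -ltnS ltn_ord /= coefMC coef2X2.
rewrite -mulr_natr natn; ring.
Qed.
End PolyPart.


Lemma val_add p e B C : prime p -> 0 < B -> logn p B = e -> p ^ e.+1 %| C ->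
  logn p (B + C) = e.
Proof.
move=> pp B0 hB hC; have S0 : 0 < B + C by rewrite addn_gt0 B0.
apply/eqP; rewrite eqn_leq; apply/andP; split.
  by rewrite leqNgt -(pfactor_dvdn _ pp S0) (dvdn_addl _ hC) (pfactor_dvdn _ pp B0) hB ltnn.
rewrite -(pfactor_dvdn _ pp S0) dvdn_add //; first by rewrite -hB pfactor_dvdnn.
exact: dvdn_trans (dvdn_exp2l p (leqnSn e)) hC.
Qed.

Lemma logn_lt p x k : 1 < p -> 0 < x -> x < p ^ k -> logn p x < k.
Proof.
move=> p1 x0 hx; rewrite -(ltn_exp2l _ _ p1); apply: leq_ltn_trans hx.
exact: dvdn_leq x0 (pfactor_dvdnn p x).
Qed.

Lemma bin_rec m : m.+1 * 'C(m.*2.+2, m.+1) = 2 * (m.*2.+1 * 'C(m.*2, m)).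
Proof.
have h1 := mul_bin_diag m.*2.+2 m.
have h2 := mul_bin_diag m.*2.+1 m.
have h3 : 'C(m.*2.+1, m.+1) = 'C(m.*2.+1, m).
  rewrite -bin_sub; last by lia.
  by congr 'C(_, _); lia.
simpl in h1, h2. rewrite -h1 h2 h3.
by rewrite -doubleS -mul2n -mulnA.
Qed.

Lemma bnd m : 0 < m -> m.*2.+1 * 'C(m.*2, m) < 9 ^ m.
Proof.
elim: m => [//|m IH] _.
case: m IH => [|m] IH; first by [].
have := IH isT; have := bin_rec m.+1.
rewrite doubleS expnS.
set a := 'C(_, _); set b := 'C(_, _) => h1 h2.
rewrite -(ltn_pmul2l (ltn0Sn m.+1)) mulnCA h1 !expnS.
move: h2; rewrite -!addnn; move: (9 ^ m) => t.
rewrite !addSn !addnS; move hk: (m + m) => k h2.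
have h3 : (k.+3 * b).+1 <= 9 * t := h2.
apply: (@leq_trans (k.+4.+1 * (2 * (9 * t)))).
  by rewrite ltn_pmul2l // ltn_pmul2l.
rewrite !mulnA leq_mul2r; apply/orP; right; lia.
Qed.

Lemma big_id n m : m <= n ->
  'C(n.*2, m.*2) * 'C((n - m).*2, n - m) * 'C(m.*2, m) = 'C(n.*2, n) * 'C(n, m) ^ 2.
Proof.
move=> hm.
have A := @bin_fact n.*2 m.*2 (etrans (leq_double m n) hm).
have B := @bin_fact (n - m).*2 (n - m) ltac:(lia).
have Cc := @bin_fact m.*2 m ltac:(lia).
have D := @bin_fact n.*2 n ltac:(lia).
have F := @bin_fact n m hm.
have e1 : n.*2 - m.*2 = (n - m).*2 by rewrite doubleB.
have e2 : (n - m).*2 - (n - m) = n - m by rewrite -addnn addnK.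
have e3 : m.*2 - m = m by rewrite -addnn addnK.
have e4 : n.*2 - n = n by rewrite -addnn addnK.
rewrite e1 in A; rewrite e2 in B; rewrite e3 in Cc; rewrite e4 in D.
have K0 : 0 < (m`! * (n - m)`!) ^ 2 by rewrite expn_gt0 muln_gt0 !fact_gt0.
apply/eqP; rewrite -(eqn_pmul2r K0); apply/eqP.
transitivity (n.*2)`!; last by rewrite -D -F; ring.
rewrite -A -Cc -B; ring.
Qed.

Lemma logn3_2 k : logn 3 (2 ^ k) = 0.
Proof. by rewrite lognX (@ltn_log0 3 2) ?muln0. Qed.
Lemma logn3_3 k : logn 3 (3 ^ k) = k.
Proof. by rewrite lognX (logn_prime 3 (isT : prime 3)) muln1. Qed.

Lemma small_log m : 0 < m -> logn 3 'C(m.*2, m) + logn 3 m.*2.+1 < m.*2.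
Proof.
move=> m0; have h := bnd m0.
have : logn 3 (m.*2.+1 * 'C(m.*2, m)) < m.*2.
  apply: logn_lt => //; first by rewrite muln_gt0 bin_gt0 -addnn leq_addr.
  by have -> : 3 ^ m.*2 = 9 ^ m by rewrite -mul2n expnM.
rewrite lognM // ?bin_gt0 -?addnn ?leq_addr //; lia.
Qed.

Lemma term_even n j : 0 < j -> j <= n.*2 ->
  3 ^ (logn 3 'C(n.*2, n)).+1 %| 'C(n.*2, j) * 3 ^ j * ee (n.*2 - j).
Proof.
move=> j0 jn; rewrite /ee; case ho: (odd (n.*2 - j)); first by rewrite muln0 dvdn0.
have oj : odd j = false by move: ho; rewrite oddB // odd_double.
have [m hj] : exists m, j = m.*2 by exists j./2; rewrite -[j in LHS]odd_double_half oj.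
subst j.
have m0 : 0 < m by move: j0; rewrite double_gt0.
have mn : m <= n by rewrite -leq_double.
rewrite -doubleB half_double.
set X := _ * _.
have X0 : 0 < X by rewrite /X !muln_gt0 !expn_gt0 !bin_gt0 /= leq_double mn -addnn leq_addr.
rewrite pfactor_dvdn //.
have I := big_id mn.
have : X * 'C(m.*2, m) = 'C(n.*2, n) * 'C(n, m) ^ 2 * 3 ^ m.*2 * 2 ^ (n - m).
  by rewrite /X -I; ring.
move/(congr1 (logn 3)).
rewrite !lognM ?muln_gt0 ?expn_gt0 ?bin_gt0 ?leq_double ?mn -?addnn ?leq_addr //.
rewrite logn3_2 logn3_3.
have := small_log m0.
rewrite -!addnn; lia.
Qed.

Lemma term_odd n j : 1 < j -> j <= n.*2.+1 ->
  3 ^ (1 + logn 3 n.*2.+1 + logn 3 'C(n.*2, n)).+1 %|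
    'C(n.*2.+1, j) * 3 ^ j * ee (n.*2.+1 - j).
Proof.
move=> j1 jn; rewrite /ee; case ho: (odd (n.*2.+1 - j)); first by rewrite muln0 dvdn0.
have oj : odd j = true by move: ho; rewrite oddB // /= odd_double; case: (odd j).
have [m hj] : exists m, j = m.*2.+1.
  by exists j./2; rewrite -[j in LHS]odd_double_half oj add1n.
subst j.
have m0 : 0 < m by move: j1; rewrite ltnS double_gt0.
have mn : m <= n by rewrite -leq_double -ltnS.
rewrite subSS -doubleB half_double.
set X := _ * _.
have X0 : 0 < X by rewrite /X !muln_gt0 !expn_gt0 !bin_gt0 /= ltnS leq_double mn -addnn leq_addr.
rewrite pfactor_dvdn //.
have I := big_id mn.
have H := mul_bin_diag n.*2.+1 m.*2. simpl in H.
have : X * (m.*2.+1 * 'C(m.*2, m)) =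
   n.*2.+1 * 'C(n.*2, n) * 'C(n, m) ^ 2 * 3 ^ m.*2.+1 * 2 ^ (n - m).
  rewrite /X.
  transitivity ((m.*2.+1 * 'C(n.*2.+1, m.*2.+1)) * 'C((n - m).*2, n - m) * 'C(m.*2, m) * 3 ^ m.*2.+1 * 2 ^ (n - m)).
    ring.
  rewrite -H; transitivity (n.*2.+1 * ('C(n.*2, n) * 'C(n, m) ^ 2) * 3 ^ m.*2.+1 * 2 ^ (n - m)); last by ring.
  rewrite -I; ring.
move/(congr1 (logn 3)).
rewrite !lognM ?muln_gt0 ?expn_gt0 ?bin_gt0 ?ltnS ?leq_double ?mn -?addnn ?leq_addr //.
rewrite logn3_2 logn3_3.
have := small_log m0.
rewrite -!addnn; lia.
Qed.

Lemma b0 i : bump 0 i = i.+1. Proof. by []. Qed.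

Theorem theorem5 (n : nat) :
  v3 (delannoy n.*2.+1) = 1 + v3 n.*2.+1 + v3 'C(n.*2, n) /\
  v3 (delannoy n.*2) = v3 'C(n.*2, n).
Proof.
rewrite /v3; split.
- rewrite delE big_ord_recl big_ord_recl /= !b0 {1}/ee subn0 /= odd_double /= muln0 add0n.
  have e1 : ee n.*2 = 2 ^ n * 'C(n.*2, n) by rewrite /ee odd_double /= half_double.
  rewrite subSS subn0 e1.
  apply: val_add => //.
  + by rewrite !muln_gt0 !expn_gt0 !bin_gt0 -addnn leq_addr.
  + rewrite bin1 expn1.
    rewrite !lognM ?muln_gt0 ?expn_gt0 ?bin_gt0 -?addnn ?leq_addr // logn3_2.
    rewrite (logn_prime 3 (isT : prime 3)) /=; lia.
  + apply: dvdn_sum => i _.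
    apply: term_odd => //; rewrite !b0; have := ltn_ord i; lia.
- rewrite delE big_ord_recl /= ?b0 subn0 bin0 mul1n expn0 mul1n.
  have e1 : ee n.*2 = 2 ^ n * 'C(n.*2, n) by rewrite /ee odd_double /= half_double.
  rewrite e1.
  apply: val_add => //.
  + by rewrite !muln_gt0 !expn_gt0 !bin_gt0 -addnn leq_addr.
  + rewrite lognM ?expn_gt0 ?bin_gt0 -?addnn ?leq_addr //.
    by rewrite logn3_2.
  + apply: dvdn_sum => i _.
    apply: term_even => //; rewrite ?b0; have := ltn_ord i; lia.
Qed.
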